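(* Let $\tilde Q=\|q_{ik}\|$ define a $\tilde Q$-expansion of $[0,1]$ with $\inf_{i,k}q_{ik}=q_{\min}>0$, and let $\varPhi$ be the family of its cylindric intervals (interiors of cylinders of all ranks). Then $\varPhi$ is faithful for packing dimension calculation: $\dim_P(E,\varPhi)=\dim_{P(\mathit{unc})}(E)$ for every $E\subset[0,1]$.
   Context: $\tilde Q$-expansion: integers $N_k\ge2$, $q_{ik}>0$ for $k\in\mathbb N$, $i\in\{0,\dots,N_k-1\}$, $\sum_iq_{ik}=1$, $\prod_k\max_iq_{ik}=0$; with $\beta_{ik}=\sum_{l<i}q_{lk}$ each $x\in[0,1]$ is written $x=\sum_k\beta_{a_kk}\prod_{j<k}q_{a_jj}$. The rank-$n$ cylinder $\varDelta_{c_1\dots c_n}$ is the set of $x$ with $a_j(x)=c_j$ for $j\le n$; it is a closed interval of length $\prod_{j\le n}q_{c_jj}$. In $\mathbb R$ with $|A|$ = length: an uncentered $\varepsilon$-packing of $E$ is a countable family of pairwise disjoint open intervals of length $\le\varepsilon$ each meeting $E$; $\mathcal P^\alpha_{\varepsilon(\mathit{unc})}(E)=\sup\sum|E_i|^\alpha$ over these, $\mathcal P^\alpha_{0(\mathit{unc})}=\lim_{\varepsilon\to0}$, $\mathcal P^\alpha_{(\mathit{unc})}(E)=\inf\{\sum_j\mathcal P^\alpha_{0(\mathit{unc})}(E_j):E\subset\bigcup E_j\}$, $\dim_{P(\mathit{unc})}(E)=\inf\{\alpha:\mathcal P^\alpha_{(\mathit{unc})}(E)=0\}$; $\dim_P(E,\varPhi)$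 is defined the same way using only packings by intervals from $\varPhi$. *)

(* Defs.v *)
From HB Require Import structures.
From mathcomp Require Import all_boot all_order all_algebra.
From mathcomp Require Import all_classical all_reals all_analysis.
Set Implicit Arguments. Unset Strict Implicit. Unset Printing Implicit Defensive.
Import Order.TTheory GRing.Theory Num.Theory.
Import numFieldNormedType.Exports.
Local Open Scope classical_set_scope.
Local Open Scope ring_scope.

Section Packing.
Variable R : realType.

Definition oitv (I : R * R) : set R := [set x | I.1 < x < I.2].
Definition itv_len (I : R * R) : R := I.2 - I.1.

(** A countable family of open intervals is given by a sequence [I] of
    endpoint pairs together with the selector [J] of the indices actually
    used (so finite and countably infinite families are both covered).
    [adm] restricts which intervals may be used: [setT] gives the
    uncentered packings, a family [Phi] gives packings by intervals from Phi. *)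
Definition packing (adm : set (set R)) (eps : R) (E : set R)
    (J : nat -> bool) (I : nat -> R * R) : Prop :=
  [/\ (forall i, J i -> adm (oitv (I i))),
      (forall i, J i -> itv_len (I i) <= eps),
      (forall i, J i -> oitv (I i) `&` E !=set0) &
      (forall i j, J i -> J j -> i <> j -> oitv (I i) `&` oitv (I j) = set0)].

Definition packing_pre (adm : set (set R)) (alpha eps : R) (E : set R) : \bar R :=
  ereal_sup [set s | exists J I, packing adm eps E J I /\
                     s = (\sum_(i <oo | J i) ((itv_len (I i)) `^ alpha)%:E)%E].

(** P^alpha_0(E) = lim_{eps -> 0+} P^alpha_eps(E); since P^alpha_eps(E) is
    nondecreasing in eps, this limit is the infimum over eps > 0. *)
Definition packing0 (adm : set (set R)) (alpha : R) (E : set R) : \bar R :=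
  ereal_inf [set packing_pre adm alpha eps E | eps in [set e : R | 0 < e]].

Definition packing_measure (adm : set (set R)) (alpha : R) (E : set R) : \bar R :=
  ereal_inf [set (\sum_(j <oo) packing0 adm alpha (F j))%E
            | F in [set F : nat -> set R | E `<=` \bigcup_j F j]].

Definition packing_dim (adm : set (set R)) (E : set R) : \bar R :=
  ereal_inf [set alpha%:E | alpha in
              [set a : R | 0 <= a /\ packing_measure adm a E = 0%E]].

Definition dimP_unc (E : set R) : \bar R := packing_dim setT E.
Definition dimP_fam (Phi : set (set R)) (E : set R) : \bar R := packing_dim Phi E.

(** Q~-expansion data: [N k] = N_k, [q i k] = q_{ik}; positions k start at 0. *)
Definition beta (q : nat -> nat -> R) (i k : nat) : R := \sum_(l < i) q l k.

Definition cyl_left (q : nat -> nat -> R) (c : nat -> nat) (n : nat) : R :=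
  \sum_(k < n) beta q (c k) k * \prod_(j < k) q (c j) j.
Definition cyl_len (q : nat -> nat -> R) (c : nat -> nat) (n : nat) : R :=
  \prod_(j < n) q (c j) j.

Definition cylinder (q : nat -> nat -> R) (c : nat -> nat) (n : nat) : set R :=
  [set x | cyl_left q c n <= x <= cyl_left q c n + cyl_len q c n].

Definition cylindric_intervals (N : nat -> nat) (q : nat -> nat -> R) : set (set R) :=
  [set A | exists (n : nat) (c : nat -> nat),
     (forall j, (j < n)%N -> (c j < N j)%N) /\
     A = oitv (cyl_left q c n, cyl_left q c n + cyl_len q c n)].

End Packing.

(* Main.v *)
Require Import Defs.
From HB Require Import structures.
From mathcomp Require Import all_boot all_order all_algebra.
From mathcomp Require Import all_classical all_reals all_analysis.
From mathcomp Require Import ring lra.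
Import Order.TTheory GRing.Theory Num.Theory.
Import numFieldNormedType.Exports.
Local Open Scope classical_set_scope.
Local Open Scope ring_scope.
Set Implicit Arguments. Unset Strict Implicit. Unset Printing Implicit Defensive.
Section Cyl.
Variable R : realType.
Variable N : nat -> nat.
Variable q : nat -> nat -> R.
Hypothesis hN : forall k, (2 <= N k)%N.
Hypothesis hpos : forall k i, (i < N k)%N -> 0 < q i k.
Hypothesis hsum : forall k, \sum_(i < N k) q i k = 1.
Variable qmin : R.
Hypothesis hq0 : 0 < qmin.
Hypothesis hqmin : forall k i, (i < N k)%N -> qmin <= q i k.

Definition valid (c : nat -> nat) n := forall j, (j < n)%N -> (c j < N j)%N.

Lemma betaS i k : beta q i.+1 k = beta q i k + q i k.
Proof. by rewrite /beta big_ord_recr. Qed.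

Lemma beta0 k : beta q 0 k = 0.
Proof. by rewrite /beta big_ord0. Qed.

Lemma betaN k : beta q (N k) k = 1.
Proof. by rewrite /beta hsum. Qed.

Lemma beta_mono k i j : (i <= j)%N -> (j <= N k)%N -> beta q i k <= beta q j k.
Proof.
move=> hij; elim: j hij => [|j IH]; first by rewrite leqn0 => /eqP ->.
rewrite leq_eqVlt => /orP[/eqP -> //|hij] hj.
rewrite betaS; apply: le_trans (IH hij (ltnW hj)) _.
by rewrite lerDl ltW // hpos.
Qed.

Lemma beta_ge0 k i : (i <= N k)%N -> 0 <= beta q i k.
Proof. by move=> hi; rewrite -(beta0 k); apply: beta_mono. Qed.

Lemma beta_le1 k i : (i <= N k)%N -> beta q i k <= 1.
Proof. by move=> hi; rewrite -(betaN k); apply: beta_mono. Qed.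

Lemma q_pair k i j : (i < j)%N -> (j < N k)%N -> q i k + q j k <= 1.
Proof.
move=> hij hj.
have h1 := beta_le1 (hj : (j.+1 <= N k)%N); rewrite betaS in h1.
have h2 : beta q i.+1 k <= beta q j k by apply: beta_mono => //; exact: ltnW.
rewrite betaS in h2.
have h3 := beta_ge0 (ltnW (ltn_trans hij hj) : (i <= N k)%N).
lra.
Qed.

Lemma q_le k i : (i < N k)%N -> q i k <= 1 - qmin.
Proof.
move=> hi; case: i hi => [|i] hi.
  have h1 : (1 < N k)%N by exact: hN.
  have := q_pair (ltnSn 0) h1; have := hqmin h1; lra.
have := q_pair (ltn0Sn i) hi; have := hqmin (ltn_trans (ltn0Sn i) hi); lra.
Qed.

Lemma qmin_le_half : qmin <= 1 / 2.
Proof.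
have h1 : (1 < N 0)%N by exact: hN.
have := q_pair (ltnSn 0) h1; have := hqmin h1; have := hqmin (ltn_trans (ltnSn 0) h1); lra.
Qed.

Lemma cyl_leftS c n :
  cyl_left q c n.+1 = cyl_left q c n + beta q (c n) n * cyl_len q c n.
Proof. by rewrite /cyl_left big_ord_recr. Qed.

Lemma cyl_lenS c n : cyl_len q c n.+1 = cyl_len q c n * q (c n) n.
Proof. by rewrite /cyl_len big_ord_recr. Qed.

Lemma cyl_left0 c : cyl_left q c 0 = 0.
Proof. by rewrite /cyl_left big_ord0. Qed.

Lemma cyl_len0 c : cyl_len q c 0 = 1.
Proof. by rewrite /cyl_len big_ord0. Qed.

Lemma cyl_len_eq c c' n : (forall j, (j < n)%N -> c j = c' j) ->
  cyl_len q c n = cyl_len q c' n.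
Proof. by move=> h; apply: eq_bigr => j _; rewrite h. Qed.

Lemma cyl_left_eq c c' n : (forall j, (j < n)%N -> c j = c' j) ->
  cyl_left q c n = cyl_left q c' n.
Proof.
move=> h; apply: eq_bigr => j _; rewrite h //; congr (_ * _).
by apply: eq_bigr => i _; rewrite h // (ltn_trans (ltn_ord i)).
Qed.

Lemma valid_le c n m : valid c n -> (m <= n)%N -> valid c m.
Proof. by move=> h hm j hj; apply: h; exact: leq_trans hj hm. Qed.

Lemma cyl_len_bounds c n : valid c n ->
  qmin ^+ n <= cyl_len q c n <= (1 - qmin) ^+ n.
Proof.
elim: n => [|n IH] hv; first by rewrite cyl_len0 !expr0 lexx.
have /andP[h1 h2] := IH (valid_le hv (leqnSn n)).
have hc : (c n < N n)%N by exact: hv.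
have := hqmin hc; have := q_le hc; have := hpos hc => hp hle hge.
have hq0' : 0 <= qmin ^+ n by rewrite exprn_ge0 // ltW.
rewrite cyl_lenS !exprSr; apply/andP; split.
  by apply: ler_pM => //; rewrite ltW.
apply: ler_pM => //; first by apply: le_trans h1.
by apply: ltW.
Qed.

Lemma cyl_len_gt0 c n : valid c n -> 0 < cyl_len q c n.
Proof.
move=> hv; have /andP[h _] := cyl_len_bounds hv.
by apply: lt_le_trans h; rewrite exprn_gt0.
Qed.

Lemma cyl_nest c n : valid c n.+1 ->
  cyl_left q c n <= cyl_left q c n.+1 /\
  cyl_left q c n.+1 + cyl_len q c n.+1 <= cyl_left q c n + cyl_len q c n.
Proof.
move=> hv; have hc : (c n < N n)%N by exact: hv.
have hl := cyl_len_gt0 (valid_le hv (leqnSn n)).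
have hb0 := beta_ge0 (ltnW hc); have hb1 := beta_le1 hc.
rewrite betaS in hb1.
rewrite cyl_leftS cyl_lenS; split; first by rewrite lerDl mulr_ge0 // ltW.
nra.
Qed.

Lemma exists_cyl n x : 0 <= x <= 1 -> exists c, valid c n /\
  cyl_left q c n <= x <= cyl_left q c n + cyl_len q c n.
Proof.
move=> hx; elim: n => [|n [c [hv /andP[hl hu]]]].
  by exists (fun _ => 0%N); split => //; rewrite cyl_left0 cyl_len0 add0r.
set L := cyl_left q c n in hl hu; set l := cyl_len q c n in hu.
have hlpos : 0 < l by apply: cyl_len_gt0.
pose P i := x <= L + beta q i.+1 n * l.
have hN1 : (0 < N n)%N by apply: leq_trans (hN n).
have hP : P (N n).-1.
  by rewrite /P prednK // betaN mul1r.
have exP : exists i, P i by exists (N n).-1.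
have [i Pi imin] := ex_minnP exP.
have hi : (i < N n)%N.
  have h2 := imin _ hP.
  by apply: leq_ltn_trans h2 _; rewrite prednK.
have hlow : L + beta q i n * l <= x.
  case: i Pi imin hi => [|k] Pi imin hi.
    by rewrite beta0 mul0r addr0.
  have : ~~ P k by apply/negP => /imin; rewrite ltnn.
  by rewrite /P -ltNge => /ltW.
pose c' := fun j => if j == n then i else c j.
have ceq : forall j, (j < n)%N -> c' j = c j.
  by move=> j hj; rewrite /c' ifF // ltn_eqF.
exists c'; split.
  move=> j; rewrite ltnS leq_eqVlt => /orP[/eqP ->|hj]; first by rewrite /c' eqxx.
  by rewrite ceq //; apply: hv.
rewrite cyl_leftS cyl_lenS (cyl_left_eq ceq) (cyl_len_eq ceq) -/L -/l.
have -> : c' n = i by rewrite /c' eqxx.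
have hb := betaS i n.
rewrite /P hb in Pi; apply/andP; split => //; lra.
Qed.

Lemma cyl_cases n c c' : valid c n -> valid c' n ->
  (cyl_left q c n = cyl_left q c' n /\ cyl_len q c n = cyl_len q c' n) \/
  cyl_left q c n + cyl_len q c n <= cyl_left q c' n \/
  cyl_left q c' n + cyl_len q c' n <= cyl_left q c n.
Proof.
elim: n => [|n IH] hv hv'.
  by left; rewrite !cyl_left0 !cyl_len0.
have [h1 h2] := cyl_nest hv.
have [h1' h2'] := cyl_nest hv'.
case: (IH (valid_le hv (leqnSn n)) (valid_le hv' (leqnSn n))) => [[eL el]|[h|h]];
  last (by right; right; lra); last (by right; left; lra).
have hc : (c n < N n)%N by exact: hv.
have hc' : (c' n < N n)%N by exact: hv'.
have hl := cyl_len_gt0 (valid_le hv (leqnSn n)).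
rewrite !cyl_leftS !cyl_lenS -eL -el.
set L := cyl_left q c n in hl *; set l := cyl_len q c n in hl *.
case: (ltngtP (c n) (c' n)) => hcc.
- right; left.
  have hb : beta q (c n).+1 n <= beta q (c' n) n by apply: beta_mono => //; exact: ltnW.
  rewrite betaS in hb; nra.
- right; right.
  have hb : beta q (c' n).+1 n <= beta q (c n) n by apply: beta_mono => //; exact: ltnW.
  rewrite betaS in hb; nra.
- by left; rewrite hcc.
Qed.


Lemma series_le_bound (u : nat -> \bar R) (P : pred nat) (B : \bar R) :
  (forall i, P i -> (0 <= u i)%E) ->
  (forall k, (\sum_(0 <= i < k | P i) u i <= B)%E) ->
  (\sum_(i <oo | P i) u i <= B)%E.
Proof.
move=> h0 hk.
have hnd : nondecreasing_seq (fun n => (\sum_(0 <= i < n | P i) u i)%E).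
  by apply: ereal_nondecreasing_series => n _; exact: h0.
rewrite (cvg_lim _ (ereal_nondecreasing_cvgn hnd)) //.
by apply: ge_ereal_sup => _ [k _ <-]; exact: hk.
Qed.

Lemma packing_pre_ge0 adm alpha eps (X : set R) :
  (0 <= packing_pre adm alpha eps X)%E.
Proof.
apply: le_ereal_sup_tmp; exists 0%E => //.
exists xpred0, (fun=> (0, 0)); split; last by rewrite eseries_pred0.
by split.
Qed.

Lemma packing0_ge0 adm alpha (X : set R) : (0 <= packing0 adm alpha X)%E.
Proof.
by apply: le_ereal_inf_tmp => _ [e _ <-]; exact: packing_pre_ge0.
Qed.

Lemma packing_measure_ge0 adm alpha (X : set R) :
  (0 <= packing_measure adm alpha X)%E.
Proof.
apply: le_ereal_inf_tmp => _ [F _ <-].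
by apply: nneseries_ge0 => n _ _; exact: packing0_ge0.
Qed.

Lemma packing_pre_mono adm adm' alpha eps (X Y : set R) :
  adm `<=` adm' -> X `<=` Y ->
  (packing_pre adm alpha eps X <= packing_pre adm' alpha eps Y)%E.
Proof.
move=> ha hxy; apply: ereal_sup_le => _ [J [I [[h1 h2 h3 h4] ->]]].
exists J, I; split => //; split => //.
- by move=> i /h1 /ha.
- by move=> i /h3 [x [hx /hxy hy]]; exists x.
Qed.

Lemma packing0_mono adm adm' alpha (X Y : set R) :
  adm `<=` adm' -> X `<=` Y ->
  (packing0 adm alpha X <= packing0 adm' alpha Y)%E.
Proof.
move=> ha hxy; apply: le_ereal_inf_tmp => _ [e he <-].
apply: ge_ereal_inf; exists (packing_pre adm alpha e X); first by exists e.
exact: packing_pre_mono.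
Qed.

Lemma packing_measure_mono adm adm' alpha (X : set R) :
  adm `<=` adm' ->
  (packing_measure adm alpha X <= packing_measure adm' alpha X)%E.
Proof.
move=> ha; apply: le_ereal_inf_tmp => _ [F hF <-].
apply: ge_ereal_inf; exists (\sum_(j <oo) packing0 adm alpha (F j))%E.
  by exists F.
apply: lee_nneseries => [n _ _|n _]; first exact: packing0_ge0.
exact: packing0_mono.
Qed.

Lemma packing0_le0 adm beta' (X : set R) (eta0 C gam : R) :
  0 < eta0 -> 0 < gam -> 0 <= C ->
  (forall eta, 0 < eta -> eta <= eta0 ->
     (packing_pre adm beta' eta X <= (C * eta `^ gam)%:E)%E) ->
  packing0 adm beta' X = 0%E.
Proof.
move=> he0 hg hC h; apply/le_anti; rewrite packing0_ge0 andbT.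
apply/lee_addgt0Pr => e he; rewrite add0e.
set t := (e / (C + 1)) `^ (gam^-1).
have ht : 0 < t by apply: powR_gt0; apply: divr_gt0 => //; lra.
set eta := Order.min eta0 t.
have heta : 0 < eta by rewrite lt_min he0 ht.
apply: ge_ereal_inf; exists (packing_pre adm beta' eta X); first by exists eta.
have hm0 : eta <= eta0 by rewrite /eta ge_min lexx.
have hm1 : eta <= t by rewrite /eta ge_min lexx orbT.
apply: le_trans (h eta heta hm0) _; rewrite lee_fin.
have h1 : eta `^ gam <= t `^ gam.
  by apply: ge0_ler_powR; rewrite ?nnegrE; [exact: ltW|exact: ltW|exact: ltW|].
have h2 : t `^ gam = e / (C + 1).
  rewrite /t -powRrM mulVf ?gt_eqF // powRr1 //.
  by apply: divr_ge0; [exact: ltW|lra].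
rewrite h2 in h1.
have h3 : C * (e / (C + 1)) <= e.
  have hx : 0 <= e / (C + 1) by apply: divr_ge0; lra.
  have hy : (C + 1) * (e / (C + 1)) = e.
    by rewrite mulrCA mulfV ?mulr1 //; apply/lt0r_neq0; lra.
  nra.
apply: le_trans h3; apply: ler_wpM2l => //.
Qed.

Lemma sum_unique (u : nat -> \bar R) (J : pred nat) (B : \bar R) :
  (forall i j, J i -> J j -> i = j) ->
  (forall i, J i -> (0 <= u i <= B)%E) -> (0 <= B)%E ->
  forall k, (\sum_(0 <= i < k | J i) u i <= B)%E.
Proof.
move=> huniq hu hB k; rewrite big_mkcond /=.
suff : (\sum_(0 <= i < k) (if J i then u i else 0) <= B)%E /\
   ((exists2 i, (i < k)%N & J i) \/ \sum_(0 <= i < k) (if J i then u i else 0) = 0)%E.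
  by case.
elim: k => [|k [IH1 IH2]]; first by rewrite big_geq // ; split => //; right.
rewrite big_nat_recr //=; case: ifP => hk.
  case: IH2 => [[i hi hJ]|->].
    by have := huniq _ _ hJ hk => eik; rewrite eik ltnn in hi.
  rewrite add0e; have /andP[_ ->] := hu _ hk; split => //.
  by left; exists k.
rewrite adde0; split => //; case: IH2 => [[i hi hJ]|->]; last by right.
by left; exists i => //; exact: ltnW.
Qed.

Lemma packing0_point (p beta' : R) : 0 < beta' ->
  packing0 setT beta' [set p] = 0%E.
Proof.
move=> hb; apply: (@packing0_le0 _ _ _ 1 1 beta') => // eta he _.
apply: ge_ereal_sup => _ [J [I [[h1 h2 h3 h4] ->]]].
have hp : forall i, J i -> oitv (I i) p.
  by move=> i /h3 [x [hx /= <-]].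
apply: series_le_bound => [i hi|k]; first by rewrite lee_fin powR_ge0.
apply: sum_unique => //.
- move=> i j hi hj; have [//|/eqP hij] := eqVneq i j; exfalso.
  have := h4 _ _ hi hj hij; rewrite -subset0 => /(_ p) H.
  exact: (H (conj (hp _ hi) (hp _ hj))).
- move=> i hi; rewrite lee_fin powR_ge0 lee_fin mul1r /=.
  apply: ge0_ler_powR; rewrite ?nnegrE; [exact: ltW| |exact: ltW|exact: h2].
  have := hp _ hi; rewrite /oitv /itv_len /= => /andP[? ?]; lra.
- by rewrite lee_fin mul1r powR_ge0.
Qed.

Lemma small_pow (z d : R) : 0 <= z < 1 -> 0 < d -> exists n, z ^+ n < d.
Proof.
move=> /andP[z0 z1] hd.
have hz : `|z| < 1 by rewrite ger0_norm.
have := cvg_expr hz; move/cvgr0Pnorm_lt => /(_ d hd) [n _ hn].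
exists n; have := hn n (leqnn n); rewrite /= ger0_norm //.
exact: exprn_ge0.
Qed.

Definition ep (m : nat) : R :=
  match @unpickle (seq nat * bool)%type m with
  | Some (s, b) => cyl_left q (fun j => nth 0%N s j) (size s) +
       (if b then cyl_len q (fun j => nth 0%N s j) (size s) else 0)
  | None => 0
  end.

Lemma ep_surj c n (b : bool) :
  exists m, ep m = cyl_left q c n + (if b then cyl_len q c n else 0).
Proof.
exists (pickle (mkseq c n, b)); rewrite /ep pickleK /= size_mkseq.
have h : forall j, (j < n)%N -> nth 0%N (mkseq c n) j = c j.
  by move=> j hj; rewrite nth_mkseq.
by rewrite (cyl_left_eq h) (cyl_len_eq h).
Qed.

Lemma rho_bounds : 0 <= 1 - qmin < 1.
Proof. have := qmin_le_half => h; have hq : 0 < qmin := hq0; apply/andP; split; lra. Qed.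

Lemma pick_cyl x d : 0 <= x <= 1 -> (forall m, x != ep m) -> 0 < d -> d <= 1 ->
  exists n c, [/\ valid c n,
     cyl_left q c n < x < cyl_left q c n + cyl_len q c n,
     qmin * d <= cyl_len q c n & cyl_len q c n < d].
Proof.
move=> hx hep hd hd1.
pose P n := exists c, [/\ valid c n,
  cyl_left q c n <= x <= cyl_left q c n + cyl_len q c n & cyl_len q c n < d].
have hqh := qmin_le_half.
have [n0 hn0] : exists n, (1 - qmin) ^+ n < d.
  exact: small_pow rho_bounds hd.
have exP : exists n, `[< P n >].
  exists n0; apply/asboolP.
  have [c [hv hc]] := exists_cyl n0 hx.
  exists c; split => //.
  have /andP[_ h] := cyl_len_bounds hv; exact: le_lt_trans h hn0.
have [n /asboolP [c [hv hc hl]] nmin] := ex_minnP exP.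
case: n nmin hv hc hl => [|k] nmin hv hc hl.
  by move: hl; rewrite cyl_len0; lra.
have hvk := valid_le hv (leqnSn k).
have [hn1 hn2] := cyl_nest hv.
have hge : d <= cyl_len q c k.
  rewrite leNgt; apply/negP => hlt.
  have : `[< P k >] by apply/asboolP; exists c; split => //; lra.
  by move/nmin; rewrite ltnn.
exists k.+1, c; split => //.
- have h1 : cyl_left q c k.+1 != x.
    by have [m hm] := ep_surj c k.+1 false; rewrite addr0 in hm; rewrite -hm eq_sym.
  have h2 : cyl_left q c k.+1 + cyl_len q c k.+1 != x.
    by have [m hm] := ep_surj c k.+1 true; rewrite -hm eq_sym.
  move: hc => /andP[hc1 hc2].
  by rewrite lt_neqAle h1 hc1 /= lt_neqAle eq_sym h2 hc2.
- rewrite cyl_lenS.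
  have hc' : (c k < N k)%N by exact: hv.
  have hq : 0 < qmin := hq0.
  have := hqmin hc'; have := cyl_len_gt0 hvk; nra.
Qed.

Lemma disj_itv (a l b y : R) : a + l <= b -> a < y -> y < a + l -> b < y -> False.
Proof. lra. Qed.

Lemma cyl_packing_bound alpha eps (G : set R) (k n : nat) (S : pred nat)
    (c : nat -> nat -> nat) (x : nat -> R) (U : nat -> R * R) (sl : bool) :
  (packing_pre (cylindric_intervals N q) alpha eps G <= 1%E)%E ->
  (forall i, S i -> [/\ valid (c i) n, G (x i),
      cyl_left q (c i) n < x i < cyl_left q (c i) n + cyl_len q (c i) n,
      cyl_len q (c i) n <= eps &
      oitv (U i) (if sl then cyl_left q (c i) n
                  else cyl_left q (c i) n + cyl_len q (c i) n)]) ->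
  (forall i j, S i -> S j -> i <> j -> oitv (U i) `&` oitv (U j) = set0) ->
  \sum_(0 <= i < k | S i) cyl_len q (c i) n `^ alpha <= 1.
Proof.
move=> hpk hS hdisj; move: hpk.
pose I' i := (cyl_left q (c i) n, cyl_left q (c i) n + cyl_len q (c i) n).
pose J' i := (i < k)%N && S i.
have hlen : forall i, itv_len (I' i) = cyl_len q (c i) n.
  by move=> i; rewrite /itv_len /= addrC addKr.
have hP : packing (cylindric_intervals N q) eps G J' I'.
  split.
  - move=> i /andP[_ /hS [hv _ _ _ _]]; exists n, (c i); split => //.
  - by move=> i /andP[_ /hS [_ _ _ hl _]]; rewrite hlen.
  - by move=> i /andP[_ /hS [_ hG hx _ _]]; exists (x i).
  - move=> i j /andP[_ hi] /andP[_ hj] hij.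
    have [hvi hGi hxi hli hpi] := hS i hi.
    have [hvj hGj hxj hlj hpj] := hS j hj.
    have := hdisj i j hi hj hij; rewrite -subset0 => H.
    case: (cyl_cases hvi hvj) => [[eL el]|[h|h]].
    + exfalso; apply: (H (if sl then cyl_left q (c i) n
                  else cyl_left q (c i) n + cyl_len q (c i) n)); split => //.
      by rewrite eL el.
    + apply/seteqP; split => // y [/= /andP[y1 y2] /andP[y3 y4]].
      move: y1 y2 y3 y4; rewrite /I' /= => y1 y2 y3 y4.
      exact: (disj_itv h y1 y2 y3).
    + apply/seteqP; split => // y [/= /andP[y1 y2] /andP[y3 y4]].
      move: y1 y2 y3 y4; rewrite /I' /= => y1 y2 y3 y4.
      exact: (disj_itv h y3 y4 y1).
move=> hpk.
have h1 : ((\sum_(0 <= i < k | J' i) ((itv_len (I' i)) `^ alpha)%:E) <= 1)%E.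
  apply: le_trans hpk; apply: le_trans (nneseries_lim_ge k _) _.
    by move=> m _ _; rewrite lee_fin powR_ge0.
  by apply: ereal_sup_ubound; exists J', I'.
move: h1; rewrite sumEFin lee_fin; apply: le_trans; rewrite le_eqVlt; apply/orP; left.
apply/eqP; rewrite big_nat_cond [RHS]big_nat_cond; apply: eq_big => [i|i].
  by rewrite /J'; case: (ltnP i k) => hik; rewrite ?andbF ?andbT //= ?andbF.
by move=> _; rewrite hlen.
Qed.

Lemma geom_sum (r : R) M : 0 <= r -> r < 1 -> \sum_(j < M) r ^+ j <= (1 - r)^-1.
Proof.
move=> r0 r1.
have h : \sum_(j < M) r ^+ j * (1 - r) = 1 - r ^+ M.
  elim: M => [|M IH]; first by rewrite big_ord0 expr0 subrr.
  by rewrite big_ord_recr /= IH exprSr; ring.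
have hr : 0 < 1 - r by rewrite subr_gt0.
rewrite -(ler_pM2r hr) mulVf ?gt_eqF // mulr_suml h.
by rewrite gerBl exprn_ge0.
Qed.

Lemma powR_expr (rho g : R) n : 0 <= rho -> (rho ^+ n) `^ g = (rho `^ g) ^+ n.
Proof.
move=> h0; elim: n => [|n IH]; first by rewrite !expr0 powR1.
by rewrite !exprS powRM ?exprn_ge0 // IH.
Qed.

Lemma endpoint_in (u1 u2 L l x : R) : u1 < x < u2 -> L < x < L + l ->
  l < u2 - u1 -> ~~ (u1 < L < u2) -> u1 < L + l < u2.
Proof.
move=> /andP[h1 h2] /andP[h3 h4] h5; rewrite negb_and -!leNgt => /orP[h|h];
  apply/andP; split; lra.
Qed.

Lemma rank_bound alpha eps (G : set R) (J : pred nat) (U : nat -> R * R)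
    (x : nat -> R) (n : nat -> nat) (c : nat -> nat -> nat) k j :
  (packing_pre (cylindric_intervals N q) alpha eps G <= 1%E)%E ->
  (forall i, J i -> [/\ G (x i), oitv (U i) (x i), valid (c i) (n i),
     cyl_left q (c i) (n i) < x i < cyl_left q (c i) (n i) + cyl_len q (c i) (n i) &
     cyl_len q (c i) (n i) < itv_len (U i) /\ cyl_len q (c i) (n i) <= eps]) ->
  (forall i i', J i -> J i' -> i <> i' -> oitv (U i) `&` oitv (U i') = set0) ->
  \sum_(0 <= i < k | J i && (n i == j)) cyl_len q (c i) (n i) `^ alpha <= 2.
Proof.
move=> hpk hs hd.
rewrite (bigID (fun i => ((U i).1 < cyl_left q (c i) (n i) < (U i).2))) /=.
have -> : (2 : R) = 1 + 1 by [].
apply: lerD.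
- rewrite (eq_bigr (fun i => cyl_len q (c i) j `^ alpha)); last first.
    by move=> i /andP[/andP[_ /eqP ->] _].
  apply: (@cyl_packing_bound alpha eps G k j _ c x U true hpk).
  + move=> i /andP[/andP[hJ /eqP hn] hU]; have [hG hUx hv hx [hl1 hl2]] := hs i hJ.
    by move: hv hx hl1 hl2 hU; rewrite hn.
  + move=> i i' /andP[/andP[hJ _] _] /andP[/andP[hJ' _] _]; exact: hd.
- rewrite (eq_bigr (fun i => cyl_len q (c i) j `^ alpha)); last first.
    by move=> i /andP[/andP[_ /eqP ->] _].
  apply: (@cyl_packing_bound alpha eps G k j _ c x U false hpk).
  + move=> i /andP[/andP[hJ /eqP hn] hU]; have [hG hUx hv hx [hl1 hl2]] := hs i hJ.
    have := endpoint_in hUx hx hl1 hU.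
    by move: hv hx hl1 hl2; rewrite hn.
  + move=> i i' /andP[/andP[hJ _] _] /andP[/andP[hJ' _] _]; exact: hd.
Qed.

Lemma core alpha beta' eps (G : set R) :
  0 <= alpha -> alpha < beta' -> 0 < eps ->
  (forall x, G x -> 0 <= x <= 1) ->
  (forall x, G x -> forall m, x != ep m) ->
  (packing_pre (cylindric_intervals N q) alpha eps G <= 1%E)%E ->
  packing0 setT beta' G = 0%E.
Proof.
move=> ha hab heps hG01 hGep hpk.
have hB := fun J U x n c k j => @rank_bound alpha eps G J U x n c k j hpk.
clear hpk.
have hq : 0 < qmin := hq0.
have hqh := qmin_le_half.
set gam := (beta' - alpha) / 2.
have hgam : 0 < gam by rewrite /gam; apply: divr_gt0 => //; rewrite subr_gt0.
set rho := 1 - qmin.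
have hrho0 : 0 < rho by rewrite /rho; lra.
have hrho1 : rho < 1 by rewrite /rho; lra.
set r := rho `^ gam.
have hr0 : 0 <= r := powR_ge0 _ _.
have hr1 : r < 1.
  have h1 : (1 : R) = 1 `^ gam by rewrite powR1.
  rewrite /r [X in _ < X]h1; apply: gt0_ltr_powR => //; rewrite ?nnegrE; lra.
set Kc := qmin^-1 `^ beta'.
have hKc : 0 <= Kc := powR_ge0 _ _.
have hr1' : 0 < 1 - r by lra.
apply: (@packing0_le0 _ _ _ (Order.min eps 1) (Kc * 2 / (1 - r)) gam) => //.
- by rewrite lt_min heps ltr01.
- by apply: divr_ge0; [apply: mulr_ge0|exact: ltW].
move=> eta heta; rewrite le_min => /andP[he1 he2].
apply: ge_ereal_sup => _ [J [U [[h1 h2 h3 h4] ->]]].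
pose spec i (t : R * nat * (nat -> nat)) :=
  [/\ G t.1.1, oitv (U i) t.1.1, valid t.2 t.1.2,
     cyl_left q t.2 t.1.2 < t.1.1 < cyl_left q t.2 t.1.2 + cyl_len q t.2 t.1.2 &
     qmin * itv_len (U i) <= cyl_len q t.2 t.1.2 /\
     cyl_len q t.2 t.1.2 < itv_len (U i)].
have hch : forall i, exists t, J i -> spec i t.
  move=> i; case hJ: (J i); last by exists (0, 0%N, fun=> 0%N).
  have [x [hxU hxG]] := h3 i hJ.
  have hd : 0 < itv_len (U i).
    by move: hxU; rewrite /oitv /itv_len /= => /andP[? ?]; lra.
  have hd1 : itv_len (U i) <= 1 by apply: le_trans (h2 i hJ) _.
  have [n [c [hv hx hl1 hl2]]] := pick_cyl (hG01 x hxG) (hGep x hxG) hd hd1.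
  by exists (x, n, c).
have [f hf] := choice hch.
pose xi i := (f i).1.1; pose ni i := (f i).1.2; pose ci i := (f i).2.
pose li i := cyl_len q (ci i) (ni i).
apply: series_le_bound => [i _|k]; first by rewrite lee_fin powR_ge0.
rewrite sumEFin lee_fin.
have hb : forall i, J i ->
    itv_len (U i) `^ beta' <= Kc * eta `^ gam * (li i `^ alpha * r ^+ ni i).
  move=> i hJ; have [hGx hUx hv hx [hl1 hl2]] := hf i hJ.
  rewrite -/(xi i) -/(ni i) -/(ci i) -/(li i) in hGx hUx hv hx hl1 hl2.
  set d := itv_len (U i) in hl1 hl2 *.
  have hl0 : 0 < li i by apply: cyl_len_gt0.
  have hlr : li i <= rho ^+ ni i by have /andP[_ ?] := cyl_len_bounds hv.
  have hd : d <= li i * qmin^-1 by rewrite ler_pdivlMr // mulrC.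
  have e1 : d `^ beta' <= li i `^ beta' * Kc.
    rewrite /Kc -powRM ?invr_ge0; [|exact: ltW|exact: ltW].
    apply: ge0_ler_powR => //; first lra.
      by rewrite nnegrE; lra.
    by rewrite nnegrE mulr_ge0 // ?invr_ge0; lra.
  have e2 : li i `^ beta' = li i `^ alpha * (li i `^ gam * li i `^ gam).
    have -> : beta' = alpha + (gam + gam) by rewrite /gam; field.
    by rewrite !powRD ?(gt_eqF hl0) ?implybT.
  have e3 : li i `^ gam <= eta `^ gam.
    apply: ge0_ler_powR; rewrite ?nnegrE; try lra.
    by apply: le_trans (ltW hl2) (h2 i hJ).
  have e4 : li i `^ gam <= r ^+ ni i.
    rewrite /r -powR_expr; last lra.
    apply: ge0_ler_powR; rewrite ?nnegrE.
    all: try lra.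
  apply: le_trans e1 _; rewrite e2.
  have p1 : 0 <= li i `^ alpha := powR_ge0 _ _.
  have p2 : 0 <= li i `^ gam := powR_ge0 _ _.
  have p3 : 0 <= eta `^ gam := powR_ge0 _ _.
  have p4 : 0 <= r ^+ ni i := exprn_ge0 _ hr0.
  rewrite mulrC -!mulrA; apply: ler_wpM2l => //.
  rewrite [X in _ <= X]mulrCA; apply: ler_wpM2l => //.
  by rewrite mulrC; apply: ler_pM.
apply: le_trans (ler_sum _ hb) _.
rewrite -mulr_sumr.
have hS : \sum_(0 <= i < k | J i) li i `^ alpha * r ^+ ni i <= 2 / (1 - r).
  set M := (\max_(i < k) ni i).+1.
  have hM : forall i, (i < k)%N -> (ni i < M)%N.
    by move=> i hi; rewrite ltnS (leq_bigmax (F := fun i : 'I_k => ni i) (Ordinal hi)).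
  rewrite big_seq_cond (partition_big (fun i => (inord (ni i) : 'I_M)) xpredT) //=.
  apply: le_trans (_ : \sum_(j < M) r ^+ j * 2 <= _); last first.
    rewrite -mulr_suml mulrC ler_pM2l //.
    exact: geom_sum.
  apply: ler_sum => j _.
  rewrite (eq_bigr (fun i => r ^+ j * li i `^ alpha)); last first.
    move=> i /andP[/andP[hin _] /eqP hp].
    have hik : (i < k)%N by move: hin; rewrite mem_index_iota.
    have hni : ni i = j by rewrite -hp inordK // hM.
    by rewrite mulrC hni.
  rewrite -mulr_sumr; apply: ler_wpM2l; first exact: exprn_ge0.
  rewrite (eq_bigl (fun i => (i \in index_iota 0 k) && (J i && (ni i == j)))); last first.
    move=> i; case hin: (i \in index_iota 0 k) => //=.
    have hik : (i < k)%N by move: hin; rewrite mem_index_iota.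
    congr (_ && _); rewrite -val_eqE /= inordK //; exact: hM.
  rewrite -big_seq_cond.
  apply: (hB J U xi ni ci k j) => [i hJ|i i' hJ hJ' hii'].
    have [hGx hUx hv hx [hl1 hl2]] := hf i hJ; split => //; split => //.
    by apply: le_trans (ltW hl2) _; apply: le_trans (h2 i hJ) _.
  exact: h4.
apply: le_trans (ler_wpM2l _ hS) _; first exact: mulr_ge0 hKc (powR_ge0 _ _).
rewrite [X in _ <= X](_ : _ = Kc * eta `^ gam * (2 / (1 - r))) //; ring.
Qed.

Lemma term_le_series (u : nat -> \bar R) j : (forall n, (0 <= u n)%E) ->
  (u j <= \sum_(n <oo) u n)%E.
Proof.
move=> h0; apply: le_trans (nneseries_lim_ge j.+1 _) => //.
rewrite big_nat_recr //= leeDr //.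
by apply: sume_ge0 => n _.
Qed.

Lemma main2 (E : set R) alpha beta' :
  (forall x, E x -> 0 <= x <= 1) ->
  0 <= alpha -> packing_measure (cylindric_intervals N q) alpha E = 0%E ->
  alpha < beta' -> packing_measure setT beta' E = 0%E.
Proof.
move=> hE ha hP hab.
have hlt : (packing_measure (cylindric_intervals N q) alpha E < 1)%E.
  by rewrite hP lte01.
have [_ [F hF <-] hy] := ereal_inf_lt hlt.
have hFj : forall j, exists eps, 0 < eps /\
    (packing_pre (cylindric_intervals N q) alpha eps (F j) < 1)%E.
  move=> j.
  have hj : (packing0 (cylindric_intervals N q) alpha (F j) < 1)%E.
    apply: le_lt_trans hy; apply: term_le_series => n; exact: packing0_ge0.
  have [_ [e he <-] hlt'] := ereal_inf_lt hj.
  by exists e.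
have [eps heps] := choice hFj.
pose G j := [set x | F j x /\ (0 <= x <= 1) /\ forall m, x != ep m].
have hG : forall j, packing0 setT beta' (G j) = 0%E.
  move=> j; have [he hlt'] := heps j.
  apply: (@core alpha beta' (eps j)) => //.
  - by move=> x [_ [h _]].
  - by move=> x [_ [_ h]].
  apply: le_trans (ltW hlt'); apply: packing_pre_mono => //.
  by move=> x [].
pose H n := if odd n then [set ep n./2] else G n./2.
apply/le_anti; rewrite packing_measure_ge0 andbT.
apply: ge_ereal_inf; exists 0%E => //; exists H.
  move=> x hx; have [j _ hFx] := hF x hx.
  have [[m hm]|hnm] := pselect (exists m, x = ep m).
    by exists m.*2.+1 => //; rewrite /H /= odd_double /= uphalf_double hm.
  exists j.*2 => //; rewrite /H odd_double half_double; split => //; split.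
    exact: hE.
  by move=> m; apply/eqP => hxm; apply: hnm; exists m.
rewrite eseries0 // => n _ _; rewrite /H; case: ifP => _.
  by apply: packing0_point; lra.
exact: hG.
Qed.


Lemma main_dim (E : set R) : (forall x, E x -> 0 <= x <= 1) ->
  dimP_fam (cylindric_intervals N q) E = dimP_unc E.
Proof.
move=> hE; rewrite /dimP_fam /dimP_unc /packing_dim.
apply/le_anti/andP; split.
  apply: ereal_inf_le_tmp => _ [a [ha0 ha] <-]; exists a => //; split => //.
  apply/le_anti; rewrite packing_measure_ge0 andbT -ha.
  by apply: packing_measure_mono.
apply: le_ereal_inf_tmp => _ [a [ha0 ha] <-].
apply/lee_addgt0Pr => e he.
apply: ge_ereal_inf; exists (a + e)%:E; last by rewrite EFinD.
exists (a + e); last reflexivity.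
split; first exact: addr_ge0 ha0 (ltW he).
by apply: (main2 hE ha0 ha); rewrite ltrDl.
Qed.
End Cyl.

Theorem theorem6 (R : realType) (N : nat -> nat) (q : nat -> nat -> R)
  (hN : forall k, (2 <= N k)%N)
  (hpos : forall k i, (i < N k)%N -> 0 < q i k)
  (hsum : forall k, \sum_(i < N k) q i k = 1)
  (hprod : (fun n => \prod_(k < n) \big[Num.max/0]_(i < N k) q i k) @ \oo --> (0 : R))
  (hmin : exists qmin : R, 0 < qmin /\ forall k i, (i < N k)%N -> qmin <= q i k)
  (E : set R) (hE : E `<=` `[0, 1]) :
  dimP_fam (cylindric_intervals N q) E = dimP_unc E.
Proof.
have [qmin [hq0 hqmin]] := hmin.
apply: (main_dim hN hpos hsum hq0 hqmin).
by move=> x /hE; rewrite /= in_itv.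
Qed.
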